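(* There exists a strictly decreasing function $\delta:[0,\tau_D]\to(0,1]$ with $\delta(0)=1$, depending only on $n,a^*,b_*$, such that the following holds. For any trajectory of system (5), any $t_0\ge0$, and any $i\in\mathcal V_F$, $j\in\mathcal V_L$ such that the arc $(j,i)$ belongs to $\mathcal E_{\sigma(t)}$ for all $t\in[t_0,t_0+\tau_D)$, $$|x_i(t)|_{\mathcal L(y(t))}\le\delta(t-t_0)\,|x(t_0)|_{\mathcal L(y(t_0))}+2\sqrt2\int_{t_0}^{t_0+\tau_D}|z(s)|\,ds\quad\text{for all }t\in[t_0,t_0+\tau_D].$$
   Context: Standing setup. Fix integers $n\ge 2$, $k\ge 1$, $d\ge 1$. The follower set is $\mathcal V_F=\{1,\dots,n\}$ and the leader set is $\mathcal V_L=\{\hat 1,\dots,\hat k\}$ (disjoint from $\mathcal V_F$); $\mathcal V=\mathcal V_F\cup\mathcal V_L$. The interaction topology is a time-varying digraph $\mathcal G_{\sigma(t)}=(\mathcal V,\mathcal E_{\sigma(t)})$, where $\sigma:[0,\infty)\to\mathcal P$ is a piecewise constant switching signal taking values in a finite set $\mathcal P$ of digraphs on $\mathcal V$; no arc of any of these digraphs enters a leader. An arc $(j,i)$ means that $i$ receives information from $j$. Dwell-time assumption: any two consecutive switching instants of $\sigma$ are separated by at least $\tau_D>0$. For $i\in\mathcal V_F$, $N_i(\sigma(t))=\{j\in\mathcal V_F:(j,i)\in\mathcal E_{\sigma(t)}\}$ and $L_i(\sigma(t))=\{j\in\mathcal V_L:(j,i)\in\mathcal E_{\sigma(t)}\}$.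 System (5): $\dot y_i=u_i(y,t)$ for $i=1,\dots,k$, and $\dot x_i=\sum_{j\in N_i(\sigma(t))}a_{ij}(x,y,t)(x_j-x_i)+\sum_{j\in L_i(\sigma(t))}b_{ij}(x,y,t)(y_j-x_i)+w_i(t)$ for $i=1,\dots,n$, where $x_i,y_j\in\mathbb R^d$, $x=(x_1,\dots,x_n)$, $y=(y_1,\dots,y_k)$; each $u_i(y,t)$ is continuous in $y$ and piecewise continuous in $t$; each $w_i$ is continuous; the weights $a_{ij},b_{ij}$ are continuous and satisfy $a_*\le a_{ij}(x,y,t)\le a^*$, $b_{ij}(x,y,t)\ge b_*$ for all $x,y,t$, with constants $0<a_*\le a^*$, $b_*>0$. Along a trajectory, $z(t)=(u_1(y(t),t),\dots,u_k(y(t),t),w_1(t),\dots,w_n(t))\in\mathbb R^{(n+k)d}$. Set notation: $|\cdot|$ is the Euclidean norm; for a closed convex $K\subset\mathbb R^d$, $|v|_K=\inf_{p\in K}|v-p|$; $\mathcal L(y(t))=\mathrm{co}\{y_1(t),\dots,y_k(t)\}$ (convex hull); $|x(t)|_{\mathcal L(y(t))}=\max_{i\in\mathcal V_F}|x_i(t)|_{\mathcal L(y(t))}$. *)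

(* Defs.v *)
From Stdlib Require Import Reals Lra List ClassicalEpsilon.
Open Scope R_scope.

(* Vertices: followers Fol i (i = 0..n-1 stands for 1..n),
   leaders Lead j (j = 0..k-1 stands for \hat 1 .. \hat k). *)
Inductive vertex : Type := Fol (i : nat) | Lead (j : nat).

Fixpoint rsum (m : nat) (f : nat -> R) : R :=
  match m with O => 0 | S m' => rsum m' f + f m' end.

Fixpoint maxR (m : nat) (f : nat -> R) : R :=
  match m with O => 0 | S m' => Rmax (maxR m' f) (f m') end.

(* vectors of R^d are functions nat -> R, components 0..d-1 *)
Definition vnorm2 (d : nat) (v : nat -> R) : R := rsum d (fun l => v l * v l).
Definition vnorm (d : nat) (v : nat -> R) : R := sqrt (vnorm2 d v).

Definition hull (d k : nat) (Y : nat -> nat -> R) (p : nat -> R) : Prop :=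
  exists lam : nat -> R,
    (forall j, (j < k)%nat -> 0 <= lam j) /\ rsum k lam = 1 /\
    (forall l, (l < d)%nat -> p l = rsum k (fun j => lam j * Y j l)).

(* |v|_K = inf_{p in K} |v - p|  (defined as 0 when K is empty) *)
Definition negdists (d : nat) (v : nat -> R) (K : (nat -> R) -> Prop) (r : R) : Prop :=
  exists p, K p /\ r = - vnorm d (fun l => v l - p l).

Lemma negdists_bound d v K : bound (negdists d v K).
Proof.
  exists 0. intros r [p [_ ->]]. unfold vnorm.
  pose proof (sqrt_pos (vnorm2 d (fun l => v l - p l))). lra.
Qed.

Definition setdist (d : nat) (v : nat -> R) (K : (nat -> R) -> Prop) : R :=
  match excluded_middle_informative (exists r, negdists d v K r) with
  | left H => - proj1_sig (completeness _ (negdists_bound d v K) H)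
  | right _ => 0
  end.

Definition hdist (d k : nat) (Y : nat -> nat -> R) (v : nat -> R) : R :=
  setdist d v (hull d k Y).

Definition maxdist (n d k : nat) (X Y : nat -> nat -> R) : R :=
  maxR n (fun i => hdist d k Y (X i)).

Definition locally_finite (S : R -> Prop) : Prop :=
  forall M, exists lst : list R, forall t, S t -> Rabs t <= M -> In t lst.

Definition cont_on (a b : R) (f : R -> R) : Prop :=
  forall t, a <= t <= b -> forall eps, 0 < eps -> exists del, 0 < del /\
    forall s, a <= s <= b -> Rabs (s - t) < del -> Rabs (f s - f t) < eps.

(* states: X i l = l-th component of x_i ; Y j l = l-th component of y_j *)
Definition close (m d : nat) (del : R) (X X' : nat -> nat -> R) : Prop :=
  forall i l, (i < m)%nat -> (l < d)%nat -> Rabs (X' i l - X i l) < del.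

Definition weight_continuous (n k d : nat)
  (A : (nat -> nat -> R) -> (nat -> nat -> R) -> R -> R) : Prop :=
  forall X Y t, 0 <= t -> forall eps, 0 < eps -> exists del, 0 < del /\
    forall X' Y' t', 0 <= t' -> Rabs (t' - t) < del ->
      close n d del X X' -> close k d del Y Y' ->
      Rabs (A X' Y' t' - A X Y t) < eps.

Definition cont_in_y (k d : nat) (U : (nat -> nat -> R) -> R -> nat -> R) : Prop :=
  forall t Y, 0 <= t -> forall l, (l < d)%nat -> forall eps, 0 < eps ->
    exists del, 0 < del /\ forall Y', close k d del Y Y' ->
      Rabs (U Y' t l - U Y t l) < eps.

(* u(y,t) piecewise continuous in t: jointly continuous at every (y,t) with
   t >= 0 outside a locally finite set of exceptional times *)
Definition pw_cont_in_t (k d : nat) (U : (nat -> nat -> R) -> R -> nat -> R) : Prop :=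
  exists D : R -> Prop, locally_finite D /\
    forall t Y, 0 <= t -> ~ D t -> forall l, (l < d)%nat -> forall eps, 0 < eps ->
      exists del, 0 < del /\ forall Y' t', 0 <= t' -> Rabs (t' - t) < del ->
        close k d del Y Y' -> Rabs (U Y' t' l - U Y t l) < eps.

(* right-hand side of the follower equation in system (5); arc (u,v) in the
   digraph G p means  G p u v = true  (v receives information from u) *)
Definition rhs_x {P : Type} (n k : nat) (G : P -> vertex -> vertex -> bool)
  (sigma : R -> P)
  (a b : nat -> nat -> (nat -> nat -> R) -> (nat -> nat -> R) -> R -> R)
  (w : nat -> R -> nat -> R) (x y : R -> nat -> nat -> R)
  (i : nat) (t : R) (l : nat) : R :=
  rsum n (fun j => if G (sigma t) (Fol j) (Fol i)
                   then a i j (x t) (y t) t * (x t j l - x t i l) else 0)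
  + rsum k (fun j => if G (sigma t) (Lead j) (Fol i)
                     then b i j (x t) (y t) t * (y t j l - x t i l) else 0)
  + w i t l.

(* (x,y) is a trajectory of system (5) on [0,T]: continuous, and satisfying the
   differential equations at every time in (0,T) outside a locally finite set *)
Definition is_trajectory {P : Type} (n k d : nat) (G : P -> vertex -> vertex -> bool)
  (sigma : R -> P)
  (a b : nat -> nat -> (nat -> nat -> R) -> (nat -> nat -> R) -> R -> R)
  (u : nat -> (nat -> nat -> R) -> R -> nat -> R) (w : nat -> R -> nat -> R)
  (T : R) (x y : R -> nat -> nat -> R) : Prop :=
  (forall i l, (i < n)%nat -> (l < d)%nat -> cont_on 0 T (fun t => x t i l)) /\
  (forall j l, (j < k)%nat -> (l < d)%nat -> cont_on 0 T (fun t => y t j l)) /\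
  exists S : R -> Prop, locally_finite S /\
    forall t, 0 < t < T -> ~ S t ->
      (forall j l, (j < k)%nat -> (l < d)%nat ->
         derivable_pt_lim (fun s => y s j l) t (u j (y t) t l)) /\
      (forall i l, (i < n)%nat -> (l < d)%nat ->
         derivable_pt_lim (fun s => x s i l) t (rhs_x n k G sigma a b w x y i t l)).

Definition dwell_time_signal {P : Type} (tauD : R) (sigma : R -> P) : Prop :=
  exists Sw : R -> Prop,
    (forall s, Sw s -> 0 <= s) /\
    (forall s1 s2, Sw s1 -> Sw s2 -> s1 < s2 -> tauD <= s2 - s1) /\
    (forall t1 t2, 0 <= t1 <= t2 -> (forall s, Sw s -> ~ (t1 <= s <= t2)) ->
       sigma t1 = sigma t2).

Definition znorm (n k d : nat) (u : nat -> (nat -> nat -> R) -> R -> nat -> R)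
  (w : nat -> R -> nat -> R) (y : R -> nat -> nat -> R) (t : R) : R :=
  sqrt (rsum k (fun j => vnorm2 d (u j (y t) t)) + rsum n (fun i => vnorm2 d (w i t))).

(* Main.v *)
Require Import Defs.
From Stdlib Require Import Reals List.
From Stdlib Require Import Lra Lia ClassicalEpsilon Classical.
Open Scope R_scope.

Lemma rsum_ext m f g : (forall l, (l < m)%nat -> f l = g l) -> rsum m f = rsum m g.
Proof. induction m; simpl; intros H; auto. rewrite IHm by (intros; apply H; lia). rewrite H by lia. auto. Qed.

Lemma rsum_plus m f g : rsum m (fun l => f l + g l) = rsum m f + rsum m g.
Proof. induction m; simpl; [lra|]. rewrite IHm. lra. Qed.

Lemma rsum_minus m f g : rsum m (fun l => f l - g l) = rsum m f - rsum m g.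
Proof. induction m; simpl; [lra|]. rewrite IHm. lra. Qed.

Lemma rsum_scal m c f : rsum m (fun l => c * f l) = c * rsum m f.
Proof. induction m; simpl; [lra|]. rewrite IHm. lra. Qed.

Lemma rsum_zero m : rsum m (fun _ => 0) = 0.
Proof. induction m; simpl; [lra|]. rewrite IHm. lra. Qed.

Lemma rsum_le m f g : (forall l, (l < m)%nat -> f l <= g l) -> rsum m f <= rsum m g.
Proof. induction m; simpl; intros H; [lra|]. pose proof (H m ltac:(lia)).
  assert (rsum m f <= rsum m g) by (apply IHm; intros; apply H; lia). lra. Qed.

Lemma rsum_nonneg m f : (forall l, (l < m)%nat -> 0 <= f l) -> 0 <= rsum m f.
Proof. intros H. rewrite <- (rsum_zero m). apply rsum_le. auto. Qed.

Lemma rsum_ge_term m f j : (forall l, (l < m)%nat -> 0 <= f l) -> (j < m)%nat -> f j <= rsum m f.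
Proof. induction m; simpl; intros H Hj; [lia|].
  assert (0 <= rsum m f) by (apply rsum_nonneg; intros; apply H; lia).
  destruct (Nat.eq_dec j m). subst. lra.
  assert (f j <= rsum m f) by (apply IHm; [intros; apply H; lia| lia]).
  pose proof (H m ltac:(lia)). lra. Qed.

Lemma rsum_le_term m f j : (forall l, (l < m)%nat -> f l <= 0) -> (j < m)%nat -> rsum m f <= f j.
Proof. intros H Hj. pose proof (rsum_ge_term m (fun l => - f l) j).
  assert (rsum m (fun l => - f l) = - rsum m f).
  { replace (- rsum m f) with (-1 * rsum m f) by ring. rewrite <- (rsum_scal m (-1)). apply rsum_ext. intros; lra. }
  assert (- f j <= rsum m (fun l => - f l)) by (apply H0; auto; intros; pose proof (H l H2); lra).
  lra. Qed.

Lemma rsum_swap m p (f : nat -> nat -> R) :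
  rsum m (fun l => rsum p (fun j => f l j)) = rsum p (fun j => rsum m (fun l => f l j)).
Proof. induction m; simpl. rewrite rsum_zero; auto.
  rewrite IHm. rewrite <- rsum_plus. auto. Qed.

Lemma rsum_le_const m f K : (forall l, (l < m)%nat -> f l <= K) -> rsum m f <= INR m * K.
Proof. induction m; cbn [rsum]; intros H; [simpl; lra|].
  assert (rsum m f <= INR m * K) by (apply IHm; intros; apply H; lia).
  pose proof (H m ltac:(lia)). rewrite S_INR. lra. Qed.

Lemma rsum_indic m j c : (j < m)%nat -> rsum m (fun l => if Nat.eqb l j then c else 0) = c.
Proof. induction m; simpl; intros Hj; [lia|].
  destruct (Nat.eq_dec j m).
  - subst. rewrite Nat.eqb_refl. rewrite (rsum_ext m _ (fun _ => 0)). rewrite rsum_zero. lra.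
    intros l Hl. destruct (Nat.eqb_spec l m); [lia|auto].
  - destruct (Nat.eqb_spec m j); [lia|]. rewrite IHm by lia. lra. Qed.

Definition dot (d : nat) (e v : nat -> R) := rsum d (fun l => e l * v l).

Lemma vnorm2_nonneg d v : 0 <= vnorm2 d v.
Proof. apply rsum_nonneg. intros. nra. Qed.

Lemma dot_le_aux d e v r : 0 < r -> 2 * dot d e v <= r * vnorm2 d e + vnorm2 d v / r.
Proof. intros Hr. unfold dot, vnorm2. rewrite <- rsum_scal.
  unfold Rdiv. rewrite (Rmult_comm (rsum d _)), <- rsum_scal, <- rsum_scal, <- rsum_plus.
  apply rsum_le. intros l _.
  assert (0 <= (r * e l - v l) * (r * e l - v l) / r).
  { unfold Rdiv. apply Rmult_le_pos; [apply Rle_0_sqr| left; apply Rinv_0_lt_compat; auto]. }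
  assert ((r * e l - v l) * (r * e l - v l) / r = r * (e l * e l) + / r * (v l * v l) - 2 * (e l * v l)).
  { field. lra. } lra. Qed.

Lemma dot_le d e v : vnorm2 d e <= 1 -> dot d e v <= vnorm d v.
Proof. intros He. unfold vnorm. pose proof (vnorm2_nonneg d v) as Hv. pose proof (vnorm2_nonneg d e).
  destruct (Req_dec (vnorm2 d v) 0) as [E|E].
  - rewrite E, sqrt_0. apply Rnot_lt_le. intros Hlt.
    pose proof (dot_le_aux d e v (dot d e v) Hlt). rewrite E in H0. unfold Rdiv in H0. nra.
  - assert (0 < sqrt (vnorm2 d v)) by (apply sqrt_lt_R0; lra).
    pose proof (dot_le_aux d e v _ H0).
    assert (vnorm2 d v / sqrt (vnorm2 d v) = sqrt (vnorm2 d v)).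
    { pattern (vnorm2 d v) at 1. rewrite <- (sqrt_sqrt (vnorm2 d v)) by lra. field. lra. }
    rewrite H2 in H1. nra. Qed.

Lemma dot_minus d e v w : dot d e (fun l => v l - w l) = dot d e v - dot d e w.
Proof. unfold dot. rewrite <- rsum_minus. apply rsum_ext. intros l _; ring. Qed.

Lemma dot_zero d v : dot d (fun _ => 0) v = 0.
Proof. unfold dot. transitivity (rsum d (fun _ => 0)); [apply rsum_ext; intros; ring | apply rsum_zero]. Qed.

Lemma sd_le d v K p : K p -> setdist d v K <= vnorm d (fun l => v l - p l).
Proof. intros Kp. unfold setdist.
  destruct (excluded_middle_informative _) as [H|H].
  - destruct (completeness _ _ _) as [s [Hub Hlub0]]. simpl.
    assert (- vnorm d (fun l => v l - p l) <= s) by (apply Hub; exists p; auto). lra.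
  - exfalso. apply H. exists (- vnorm d (fun l => v l - p l)). exists p; auto. Qed.

Lemma sd_nonneg d v K : 0 <= setdist d v K.
Proof. unfold setdist.
  destruct (excluded_middle_informative _) as [H|H]; [|lra].
  destruct (completeness _ _ _) as [s [Hub0 Hlub]]. simpl.
  assert (s <= 0). { apply Hlub. intros r [p [_ ->]]. unfold vnorm.
    pose proof (sqrt_pos (vnorm2 d (fun l => v l - p l))). lra. } lra. Qed.

Lemma sd_approx d v K : (exists p, K p) -> forall eta, 0 < eta ->
  exists p, K p /\ vnorm d (fun l => v l - p l) < setdist d v K + eta.
Proof. intros [p0 Hp0] eta Heta. unfold setdist.
  destruct (excluded_middle_informative _) as [H|H].
  - destruct (completeness _ _ _) as [s [Hub Hlub]]. simpl.
    apply NNPP. intros Hn.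
    assert (s <= s - eta); [|lra].
    apply Hlub. intros r [p [Kp ->]].
    apply Rnot_lt_le. intros Hl. apply Hn. exists p. split; auto. lra.
  - exfalso. apply H. exists (- vnorm d (fun l => v l - p0 l)). exists p0; auto. Qed.

Lemma hull_dot d k Y p e c : hull d k Y p -> (forall j, (j < k)%nat -> dot d e (Y j) <= c) ->
  dot d e p <= c.
Proof. intros [lam [Hl [Hs Hp]]] HY. unfold dot.
  rewrite (rsum_ext d _ (fun l => rsum k (fun j => lam j * (e l * Y j l)))).
  2:{ intros l Hld. rewrite Hp by auto. rewrite <- rsum_scal. apply rsum_ext. intros; ring. }
  rewrite rsum_swap.
  rewrite (rsum_ext k _ (fun j => lam j * dot d e (Y j))).
  2:{ intros j _. unfold dot. rewrite <- rsum_scal. auto. }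
  apply Rle_trans with (rsum k (fun j => lam j * c)).
  apply rsum_le. intros j Hj. apply Rmult_le_compat_l; auto.
  rewrite (rsum_ext k _ (fun j => c * lam j)) by (intros; ring). rewrite rsum_scal, Hs. lra. Qed.

Lemma hull_vertex d k Y j : (j < k)%nat -> hull d k Y (Y j).
Proof. intros Hj. exists (fun m => if Nat.eqb m j then 1 else 0). split; [|split].
  - intros m _. destruct (Nat.eqb m j); lra.
  - apply rsum_indic; auto.
  - intros l _. rewrite (rsum_ext k _ (fun m => if Nat.eqb m j then Y j l else 0)).
    rewrite rsum_indic; auto.
    intros m _. destruct (Nat.eqb_spec m j); subst; ring. Qed.

Lemma hull_conv d k Y p j s : hull d k Y p -> (j < k)%nat -> 0 <= s <= 1 ->
  hull d k Y (fun l => p l + s * (Y j l - p l)).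
Proof. intros [lam [Hl [Hs Hp]]] Hj Hs1.
  exists (fun m => (1 - s) * lam m + s * (if Nat.eqb m j then 1 else 0)). split; [|split].
  - intros m Hm. pose proof (Hl m Hm). destruct (Nat.eqb m j); nra.
  - rewrite rsum_plus, rsum_scal, rsum_scal, rsum_indic by auto. rewrite Hs. ring.
  - intros l Hld.
    rewrite (rsum_ext k (fun m => ((1 - s) * lam m + s * (if Nat.eqb m j then 1 else 0)) * Y m l) (fun m => (1 - s) * (lam m * Y m l) + s * (if Nat.eqb m j then Y j l else 0))).
    rewrite rsum_plus, rsum_scal, rsum_scal, rsum_indic by auto. rewrite <- Hp by auto. ring.
    intros m _. destruct (Nat.eqb_spec m j); subst; ring. Qed.

Lemma vnorm2_expand d w g s : vnorm2 d (fun l => w l - s * g l) =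
  vnorm2 d w - 2 * s * dot d w g + s * s * vnorm2 d g.
Proof. unfold vnorm2, dot. rewrite <- !rsum_scal, <- rsum_minus, <- rsum_plus.
  apply rsum_ext. intros; ring. Qed.

Lemma sq_le_of_sqrt D X : 0 <= D -> D <= sqrt X -> 0 <= X -> D * D <= X.
Proof. intros H0 H1 H2. rewrite <- (sqrt_sqrt X H2). apply Rmult_le_compat; auto. Qed.

Lemma separation d k Y v : (1 <= k)%nat -> forall eps, 0 < eps ->
  exists e, vnorm2 d e <= 1 /\
    forall j, (j < k)%nat -> dot d e (Y j) <= dot d e v - hdist d k Y v + eps.
Proof. intros Hk eps Heps.
  set (D := hdist d k Y v).
  assert (HD0 : 0 <= D) by apply sd_nonneg.
  destruct (Rle_dec D eps) as [Hle|Hgt].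
  { exists (fun _ => 0). split.
    - unfold vnorm2. rewrite (rsum_ext d _ (fun _ => 0)) by (intros; ring). rewrite rsum_zero. lra.
    - intros j _. rewrite !dot_zero. lra. }
  apply Rnot_le_lt in Hgt.
  set (Qs := rsum k (fun j => vnorm2 d (fun l => Y j l - v l))).
  assert (HQ : 0 <= Qs) by (apply rsum_nonneg; intros; apply vnorm2_nonneg).
  set (Gb := 2 * Qs + 2 * ((D + 1) * (D + 1))).
  assert (HGb : 0 < Gb) by (unfold Gb; nra).
  set (s := Rmin 1 (eps * D / Gb)).
  assert (Hs0 : 0 < s). { unfold s. apply Rmin_glb_lt; [lra|]. unfold Rdiv. apply Rmult_lt_0_compat; [repeat apply Rmult_lt_0_compat; lra|apply Rinv_0_lt_compat; lra]. }
  assert (Hs1 : s <= 1) by apply Rmin_l.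
  assert (HsG : s * Gb <= eps * D).
  { assert (s <= eps * D / Gb) by apply Rmin_r.
    apply Rmult_le_compat_r with (r := Gb) in H; [|lra]. unfold Rdiv in H.
    rewrite Rmult_assoc, Rinv_l in H by lra. lra. }
  set (eta := Rmin 1 (eps * D * s / (2 * D + 1))).
  assert (He0 : 0 < eta). { unfold eta. apply Rmin_glb_lt; [lra|]. unfold Rdiv. apply Rmult_lt_0_compat; [repeat apply Rmult_lt_0_compat; lra|apply Rinv_0_lt_compat; lra]. }
  assert (He1 : eta <= 1) by apply Rmin_l.
  assert (HeD : eta * (2 * D + 1) <= eps * D * s).
  { assert (eta <= eps * D * s / (2 * D + 1)) by apply Rmin_r.
    apply Rmult_le_compat_r with (r := 2 * D + 1) in H; [|lra]. unfold Rdiv in H.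
    rewrite Rmult_assoc, Rinv_l in H by lra. lra. }
  destruct (sd_approx d v (hull d k Y) (ex_intro _ (Y 0%nat) (hull_vertex d k Y 0%nat ltac:(lia))) eta He0)
    as [p [Hp Hpr]].
  fold (hdist d k Y v) in Hpr. fold D in Hpr.
  set (w := fun l => v l - p l). fold w in Hpr.
  set (r := vnorm d w).
  assert (HrD : D <= r) by (apply sd_le; auto).
  assert (Hr0 : 0 < r) by lra.
  assert (Hrr : r < D + eta) by exact Hpr.
  assert (Hw2 : vnorm2 d w = r * r).
  { unfold r, vnorm. rewrite sqrt_sqrt; auto. apply vnorm2_nonneg. }
  exists (fun l => w l / r). split.
  { unfold vnorm2. rewrite (rsum_ext d _ (fun l => / (r * r) * (w l * w l))) by (intros; field; lra).
    rewrite rsum_scal. fold (vnorm2 d w). rewrite Hw2. rewrite Rinv_l; [lra|nra]. }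
  intros j Hj.
  set (g := fun l => Y j l - p l).
  assert (HG : vnorm2 d g <= Gb).
  { apply Rle_trans with (2 * vnorm2 d (fun l => Y j l - v l) + 2 * vnorm2 d w).
    - unfold vnorm2. rewrite <- !rsum_scal, <- rsum_plus. apply rsum_le. intros l _.
      unfold g, w. pose proof (Rle_0_sqr ((Y j l - v l) - (v l - p l))). unfold Rsqr in *. nra.
    - assert (vnorm2 d (fun l => Y j l - v l) <= Qs)
        by (apply (rsum_ge_term k (fun j => vnorm2 d (fun l => Y j l - v l))); auto; intros; apply vnorm2_nonneg).
      rewrite Hw2. assert (r*r <= (D+1)*(D+1)) by (apply Rmult_le_compat; lra). unfold Gb. lra. }
  assert (Hconv := hull_conv d k Y p j s Hp Hj ltac:(lra)).
  assert (Hd := sd_le d v _ _ Hconv). fold (hdist d k Y v) in Hd. fold D in Hd.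
  apply sq_le_of_sqrt in Hd; auto; [|apply vnorm2_nonneg].
  unfold vnorm2 in Hd. rewrite (rsum_ext d _ (fun l => (w l - s * g l) * (w l - s * g l))) in Hd
    by (intros; unfold w, g; ring).
  fold (vnorm2 d (fun l => w l - s * g l)) in Hd.
  rewrite vnorm2_expand, Hw2 in Hd.
  assert (Hwg : dot d w g <= eps * D).
  { assert (r * r - D * D <= eta * (2 * D + 1)) by nra.
    assert (s * s * vnorm2 d g <= s * (eps * D)) by (pose proof (vnorm2_nonneg d g); nra).
    nra. }
  assert (E1 : dot d (fun l => w l / r) (Y j) = dot d (fun l => w l / r) v + dot d (fun l => w l / r) g - dot d (fun l => w l / r) w).
  { unfold dot. rewrite <- rsum_plus, <- rsum_minus. apply rsum_ext. intros; unfold g, w; ring. }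
  assert (E2 : forall z, dot d (fun l => w l / r) z = / r * dot d w z).
  { intros z. unfold dot. rewrite <- rsum_scal. apply rsum_ext. intros; unfold Rdiv; ring. }
  rewrite E1, !E2. change (dot d w w) with (vnorm2 d w). rewrite Hw2.
  assert (/ r * dot d w g <= eps).
  { apply Rmult_le_reg_l with r; auto. rewrite <- Rmult_assoc, Rinv_r by lra. nra. }
  assert (/ r * (r * r) = r) by (field; lra). lra. Qed.

Lemma fin_delta N (P : nat -> R -> Prop) :
  (forall m, (m < N)%nat -> exists del, 0 < del /\ P m del) ->
  (forall m del del', 0 < del' <= del -> P m del -> P m del') ->
  exists del, 0 < del /\ forall m, (m < N)%nat -> P m del.
Proof. intros H Hmono. induction N.
  - exists 1. split; [lra|]. intros; lia.
  - destruct IHN as [d1 [Hd1 H1]]. intros; apply H; lia.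
    destruct (H N ltac:(lia)) as [d2 [Hd2 H2]].
    exists (Rmin d1 d2). split. apply Rmin_glb_lt; auto.
    intros m Hm. destruct (Nat.eq_dec m N).
    + subst. apply Hmono with d2; auto. split. apply Rmin_glb_lt; auto. apply Rmin_r.
    + apply Hmono with d1; auto. split. apply Rmin_glb_lt; auto. apply Rmin_l. apply H1; lia. Qed.

Lemma list_gap (L : list R) s : exists h, 0 < h /\ forall x, In x L -> x < s -> x <= s - h.
Proof. induction L as [|a L IH].
  - exists 1. split; [lra|]. intros x [].
  - destruct IH as [h [Hh HL]].
    destruct (Rlt_dec a s).
    + exists (Rmin h (s - a)). split. apply Rmin_glb_lt; lra.
      intros x [<-|Hx] Hxs. pose proof (Rmin_r h (s - a)). lra.
      pose proof (HL x Hx Hxs). pose proof (Rmin_l h (s - a)). lra.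
    + exists h. split; auto. intros x [<-|Hx] Hxs. lra. auto. Qed.

Lemma gap S : locally_finite S -> forall s, exists h, 0 < h /\ forall c, s - h < c < s -> ~ S c.
Proof. intros HS s. destruct (HS (Rabs s + 1)) as [L HL].
  destruct (list_gap L s) as [h [Hh HG]].
  exists (Rmin h 1). split. apply Rmin_glb_lt; lra.
  intros c Hc Sc. pose proof (Rmin_l h 1). pose proof (Rmin_r h 1).
  assert (In c L). { apply HL; auto. unfold Rabs. destruct (Rcase_abs c); destruct (Rcase_abs s); lra. }
  pose proof (HG c H1 ltac:(lra)). lra. Qed.

Lemma barrier N p q (phi : nat -> R -> R) : p <= q ->
  (forall m, (m < N)%nat -> cont_on p q (phi m)) ->
  (forall m, (m < N)%nat -> phi m p < 0) ->
  (forall s m, p < s <= q -> (m < N)%nat -> phi m s = 0 ->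
     (forall m' c, (m' < N)%nat -> p <= c < s -> phi m' c < 0) -> False) ->
  forall m t, (m < N)%nat -> p <= t <= q -> phi m t < 0.
Proof. intros Hpq Hc H0 Hv.
  set (A := fun r => p <= r <= q /\ forall m c, (m < N)%nat -> p <= c <= r -> phi m c < 0).
  assert (Ap : A p). { split; [lra|]. intros m c Hm Hc'. replace c with p by lra. auto. }
  assert (Hb : bound A). { exists q. intros r [Hr _]. lra. }
  destruct (completeness A Hb (ex_intro _ p Ap)) as [s [Hub Hlub]].
  assert (Hps : p <= s) by (apply Hub; auto).
  assert (Hsq : s <= q). { apply Hlub. intros r [Hr _]. lra. }
  assert (C1 : forall m c, (m < N)%nat -> p <= c < s -> phi m c < 0).
  { intros m c Hm Hc'. apply NNPP. intros Hn.
    assert (s <= c); [|lra]. apply Hlub. intros r Ar. apply Rnot_lt_le. intros Hrc.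
    apply Hn. destruct Ar as [_ Ar]. apply Ar; auto. lra. }
  assert (C2 : forall m, (m < N)%nat -> phi m s <= 0).
  { intros m Hm. destruct (Req_dec s p) as [E|E]. rewrite E. left; auto.
    apply Rnot_lt_le. intros Hpos.
    destruct (Hc m Hm s ltac:(lra) (phi m s) Hpos) as [del [Hdel Hd]].
    set (c := Rmax p (s - del / 2)).
    assert (p <= c < s). { unfold c. split. apply Rmax_l. apply Rmax_lub_lt; lra. }
    assert (s - del/2 <= c) by apply Rmax_r.
    pose proof (Hd c ltac:(lra) ltac:(rewrite Rabs_left; lra)).
    pose proof (C1 m c Hm H). apply Rabs_def2 in H2. lra. }
  destruct (classic (exists m, (m < N)%nat /\ phi m s = 0)) as [[m [Hm E]]|Hno].
  { exfalso. apply (Hv s m); auto. split; auto. destruct (Req_dec s p); [|lra].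
    subst. pose proof (H0 m Hm). lra. }
  assert (C3 : forall m, (m < N)%nat -> phi m s < 0).
  { intros m Hm. destruct (C2 m Hm); auto. exfalso; apply Hno; eauto. }
  assert (As : A s). { split; [lra|]. intros m c Hm Hc'. destruct (Req_dec c s). subst; auto. apply C1; auto; lra. }
  destruct (Req_dec s q) as [Eq|Nq].
  { intros m t Hm Ht. destruct As as [_ As]. apply As; auto. lra. }
  exfalso.
  destruct (fin_delta N (fun m del => forall c, p <= c <= q -> Rabs (c - s) < del -> phi m c < 0)) as [del [Hdel Hd]].
  { intros m Hm. destruct (Hc m Hm s ltac:(lra) (- phi m s) ltac:(pose proof (C3 m Hm); lra)) as [del [Hdel Hd]].
    exists del. split; auto. intros c Hc' Hcs. pose proof (Hd c Hc' Hcs). apply Rabs_def2 in H. lra. }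
  { intros m del del' Hdd HP c Hc' Hcs. apply HP; auto. lra. }
  set (r := Rmin q (s + del / 2)).
  assert (s < r). { unfold r. apply Rmin_glb_lt; lra. }
  assert (r <= s + del/2) by apply Rmin_r.
  assert (r <= q) by apply Rmin_l.
  assert (A r). { split; [lra|]. intros m c Hm Hc'. destruct (Rlt_dec c s). apply C1; auto; lra.
    apply Hd; auto. lra. rewrite Rabs_right; lra. }
  pose proof (Hub r H3). lra. Qed.

From Coquelicot Require Import Coquelicot.
Open Scope R_scope.

Lemma left_decr (f : R -> R) s h : 0 < h ->
  (forall c, s - h < c < s -> exists l, derivable_pt_lim f c l /\ l <= 0) ->
  (forall eps, 0 < eps -> exists del, 0 < del /\ forall c, s - del < c < s -> Rabs (f c - f s) < eps) ->
  forall r, s - h < r < s -> f s <= f r.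
Proof. intros Hh Hd Hc r Hr.
  assert (K : forall s', r < s' < s -> f s' <= f r).
  { intros s' Hs'.
    destruct (MVT_gen f r s' (Derive f)) as [c [Hc1 Hc2]].
    - intros x Hx. rewrite Rmin_left, Rmax_right in Hx by lra.
      destruct (Hd x ltac:(lra)) as [l [Hl _]].
      assert (is_derive f x l) by (apply is_derive_Reals; auto).
      assert (ex_derive f x) by (exists l; auto).
      rewrite (is_derive_unique f x l H). auto.
    - intros x Hx. rewrite Rmin_left, Rmax_right in Hx by lra.
      destruct (Hd x ltac:(lra)) as [l [Hl _]].
      apply derivable_continuous_pt. exists l. auto.
    - rewrite Rmin_left, Rmax_right in Hc1 by lra.
      destruct (Hd c ltac:(lra)) as [l [Hl Hl0]].
      assert (is_derive f c l) by (apply is_derive_Reals; auto).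
      rewrite (is_derive_unique f c l H) in Hc2. nra. }
  apply Rnot_lt_le. intros Hlt.
  destruct (Hc (f s - f r) ltac:(lra)) as [del [Hdel Hd']].
  set (c := Rmax ((r + s) / 2) (s - del / 2)).
  assert ((r+s)/2 <= c) by apply Rmax_l. assert (s - del/2 <= c) by apply Rmax_r.
  assert (c < s) by (apply Rmax_lub_lt; lra).
  pose proof (K c ltac:(lra)). pose proof (Hd' c ltac:(lra)). apply Rabs_def2 in H3. lra. Qed.

Lemma cont_on_sub a b p q f : cont_on a b f -> a <= p -> q <= b -> cont_on p q f.
Proof. intros H Hp Hq t Ht eps He. destruct (H t ltac:(lra) eps He) as [del [Hd Hs]].
  exists del. split; auto. intros s Hs' Hst. apply Hs; auto. lra. Qed.

Lemma cont_on_plus p q f g : cont_on p q f -> cont_on p q g -> cont_on p q (fun t => f t + g t).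
Proof. intros Hf Hg t Ht eps He.
  destruct (Hf t Ht (eps/2) ltac:(lra)) as [d1 [Hd1 H1]].
  destruct (Hg t Ht (eps/2) ltac:(lra)) as [d2 [Hd2 H2]].
  exists (Rmin d1 d2). split. apply Rmin_glb_lt; auto.
  intros s Hs Hst. pose proof (Rmin_l d1 d2). pose proof (Rmin_r d1 d2).
  pose proof (H1 s Hs ltac:(lra)). pose proof (H2 s Hs ltac:(lra)).
  apply Rabs_def2 in H3. apply Rabs_def2 in H4. apply Rabs_def1; lra. Qed.

Lemma cont_on_scal p q c f : cont_on p q f -> cont_on p q (fun t => c * f t).
Proof. intros Hf t Ht eps He.
  destruct (Hf t Ht (eps / (Rabs c + 1))) as [d1 [Hd1 H1]].
  { apply Rdiv_lt_0_compat; auto. pose proof (Rabs_pos c). lra. }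
  exists d1. split; auto. intros s Hs Hst. pose proof (H1 s Hs Hst).
  rewrite <- Rmult_minus_distr_l, Rabs_mult.
  pose proof (Rabs_pos c). pose proof (Rabs_pos (f s - f t)).
  apply Rle_lt_trans with ((Rabs c + 1) * Rabs (f s - f t)). nra.
  apply Rmult_lt_reg_l with (/ (Rabs c + 1)). apply Rinv_0_lt_compat; lra.
  rewrite <- Rmult_assoc, Rinv_l by lra. unfold Rdiv in H. lra. Qed.

Lemma cont_on_const p q c : cont_on p q (fun _ => c).
Proof. intros t Ht eps He. exists 1. split; [lra|]. intros. unfold Rminus. rewrite Rplus_opp_r, Rabs_R0. auto. Qed.

Lemma cont_on_minus p q f g : cont_on p q f -> cont_on p q g -> cont_on p q (fun t => f t - g t).
Proof. intros Hf Hg. apply (cont_on_plus p q f (fun t => - g t)); auto.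
  intros t Ht eps He. destruct (cont_on_scal p q (-1) g Hg t Ht eps He) as [d [Hd H]].
  exists d. split; auto. intros s Hs Hst. pose proof (H s Hs Hst).
  replace (- g s - - g t) with (-1 * g s - -1 * g t) by ring. auto. Qed.

Lemma cont_on_rsum p q m (F : nat -> R -> R) : (forall l, (l < m)%nat -> cont_on p q (F l)) ->
  cont_on p q (fun t => rsum m (fun l => F l t)).
Proof. induction m; intros H; simpl. apply cont_on_const.
  apply (cont_on_plus p q (fun t => rsum m (fun l => F l t)) (F m)).
  apply IHm; intros; apply H; lia. apply H; lia. Qed.

Lemma cont_on_of_pt p q f : (forall x, p <= x <= q -> continuity_pt f x) -> cont_on p q f.
Proof. intros H t Ht eps He. destruct (H t Ht eps He) as [del [Hd Hs]].
  exists del. split; auto. intros s Hs' Hst. destruct (Req_dec s t) as [E|E].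
  subst. unfold Rminus. rewrite Rplus_opp_r, Rabs_R0. auto.
  apply (Hs s). split. split. constructor. auto. exact Hst. Qed.

Lemma cont_pt_of_cont_on a b f x : cont_on a b f -> a < x < b -> continuity_pt f x.
Proof. intros H Hx eps He. destruct (H x ltac:(lra) eps He) as [del [Hd Hs]].
  exists (Rmin del (Rmin (x - a) (b - x))). split.
  repeat apply Rmin_glb_lt; lra.
  intros s [_ Hs']. unfold R_dist in *. pose proof (Rmin_l del (Rmin (x - a) (b - x))).
  pose proof (Rmin_r del (Rmin (x - a) (b - x))). pose proof (Rmin_l (x - a) (b - x)). pose proof (Rmin_r (x - a) (b - x)).
  apply Rabs_def2 in Hs'. apply Hs. lra. apply Rabs_def1; lra. Qed.

Lemma barrier2 N p q (phi : nat -> R -> R) : p <= q ->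
  (forall m, (m < N)%nat -> cont_on p q (phi m)) ->
  (forall m, (m < N)%nat -> phi m p < 0) ->
  (forall s m, p < s <= q -> (m < N)%nat -> phi m s = 0 ->
     (forall m' c, (m' < N)%nat -> p <= c < s -> phi m' c < 0) ->
     exists h, 0 < h /\ forall c, s - h < c < s -> p < c ->
        exists l, derivable_pt_lim (phi m) c l /\ l <= 0) ->
  forall m t, (m < N)%nat -> p <= t <= q -> phi m t < 0.
Proof. intros Hpq Hc H0 Hv. apply barrier; auto.
  intros s m Hs Hm E Hneg. destruct (Hv s m Hs Hm E Hneg) as [h [Hh Hd]].
  set (h' := Rmin h (s - p)).
  assert (0 < h') by (apply Rmin_glb_lt; lra).
  assert (h' <= h) by apply Rmin_l. assert (h' <= s - p) by apply Rmin_r.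
  assert (Hle : phi m s <= phi m (s - h'/2)).
  { apply (left_decr (phi m) s h'); auto.
    - intros c Hc'. apply Hd; lra.
    - intros eps He. destruct (Hc m Hm s ltac:(lra) eps He) as [del [Hdel Hd']].
      exists (Rmin del (s - p)). split. apply Rmin_glb_lt; lra.
      intros c Hc'. pose proof (Rmin_l del (s - p)). pose proof (Rmin_r del (s - p)).
      apply Hd'. lra. rewrite Rabs_left; lra.
    - lra. }
  pose proof (Hneg m (s - h'/2) Hm ltac:(lra)). lra.
Qed.

Lemma deriv_rsum m (F : nat -> R -> R) c (Dv : nat -> R) :
  (forall l, (l < m)%nat -> derivable_pt_lim (F l) c (Dv l)) ->
  derivable_pt_lim (fun s => rsum m (fun l => F l s)) c (rsum m Dv).
Proof. induction m; intros H; simpl.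
  - apply (derivable_pt_lim_const 0).
  - apply (derivable_pt_lim_plus (fun s => rsum m (fun l => F l s)) (F m)).
    apply IHm; intros; apply H; lia. apply H; lia. Qed.

Lemma deriv_dot d e (X : R -> nat -> R) c (Dv : nat -> R) :
  (forall l, (l < d)%nat -> derivable_pt_lim (fun s => X s l) c (Dv l)) ->
  derivable_pt_lim (fun s => dot d e (X s)) c (dot d e Dv).
Proof. intros H. unfold dot. apply (deriv_rsum d (fun l s => e l * X s l)).
  intros l Hl. apply (derivable_pt_lim_scal (fun s => X s l)). auto. Qed.

Lemma maxR_ge m f j : (j < m)%nat -> f j <= maxR m f.
Proof. induction m; simpl; intros Hj; [lia|].
  destruct (Nat.eq_dec j m). subst. apply Rmax_r.
  eapply Rle_trans. apply IHm; lia. apply Rmax_l. Qed.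

Lemma maxR_nonneg m f : 0 <= maxR m f.
Proof. induction m; simpl. lra. eapply Rle_trans. apply IHm. apply Rmax_l. Qed.

Lemma rhs_dot {P : Type} n k d (G : P -> vertex -> vertex -> bool) sigma a b w x y e m c :
  dot d e (fun l => rhs_x n k G sigma a b w x y m c l) =
  rsum n (fun j => if G (sigma c) (Fol j) (Fol m) then a m j (x c) (y c) c * (dot d e (x c j) - dot d e (x c m)) else 0)
  + rsum k (fun j => if G (sigma c) (Lead j) (Fol m) then b m j (x c) (y c) c * (dot d e (y c j) - dot d e (x c m)) else 0)
  + dot d e (w m c).
Proof. unfold dot, rhs_x.
  rewrite (rsum_ext d _ (fun l => rsum n (fun j => e l * (if G (sigma c) (Fol j) (Fol m) then a m j (x c) (y c) c * (x c j l - x c m l) else 0))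
     + rsum k (fun j => e l * (if G (sigma c) (Lead j) (Fol m) then b m j (x c) (y c) c * (y c j l - x c m l) else 0))
     + e l * w m c l)).
  2:{ intros l _. rewrite !rsum_scal. ring. }
  rewrite !rsum_plus, !(rsum_swap d). f_equal. f_equal.
  - apply rsum_ext. intros j _. destruct (G (sigma c) (Fol j) (Fol m)).
    + rewrite <- rsum_minus, <- rsum_scal. apply rsum_ext. intros; ring.
    + rewrite (rsum_ext d _ (fun _ => 0)) by (intros; ring). apply rsum_zero.
  - apply rsum_ext. intros j _. destruct (G (sigma c) (Lead j) (Fol m)).
    + rewrite <- rsum_minus, <- rsum_scal. apply rsum_ext. intros; ring.
    + rewrite (rsum_ext d _ (fun _ => 0)) by (intros; ring). apply rsum_zero. Qed.

Lemma cont_pt_rsum m (F : nat -> R -> R) c : (forall l, (l < m)%nat -> continuity_pt (F l) c) ->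
  continuity_pt (fun s => rsum m (fun l => F l s)) c.
Proof. induction m; intros H; simpl. apply continuity_pt_const. intros a b; auto.
  apply (continuity_pt_plus (fun s => rsum m (fun l => F l s)) (F m)).
  apply IHm; intros; apply H; lia. apply H; lia. Qed.

Lemma cont_pt_vnorm2 d (V : R -> nat -> R) c : (forall l, (l < d)%nat -> continuity_pt (fun s => V s l) c) ->
  continuity_pt (fun s => vnorm2 d (V s)) c.
Proof. intros H. unfold vnorm2. apply (cont_pt_rsum d (fun l s => V s l * V s l)).
  intros l Hl. apply (continuity_pt_mult (fun s => V s l) (fun s => V s l)); auto. Qed.

Lemma u_comp_cont k d (U : (nat -> nat -> R) -> R -> nat -> R) (y : R -> nat -> nat -> R) c (l : nat) T :
  0 < c < T -> (forall j l', (j < k)%nat -> (l' < d)%nat -> cont_on 0 T (fun t => y t j l')) ->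
  (forall eps, 0 < eps -> exists del, 0 < del /\ forall Y' t', 0 <= t' -> Rabs (t' - c) < del ->
      Defs.close k d del (y c) Y' -> Rabs (U Y' t' l - U (y c) c l) < eps) ->
  continuity_pt (fun s => U (y s) s l) c.
Proof. intros Hc Hy HU eps He. destruct (HU eps He) as [del [Hdel Hd]].
  destruct (fin_delta k (fun j dl => forall s, Rabs (s - c) < dl -> forall l', (l' < d)%nat -> Rabs (y s j l' - y c j l') < del))
    as [d1 [Hd1 H1]].
  { intros j Hj.
    destruct (fin_delta d (fun l' dl => forall s, Rabs (s - c) < dl -> Rabs (y s j l' - y c j l') < del)) as [d2 [Hd2 H2]].
    - intros l' Hl'. pose proof (cont_pt_of_cont_on 0 T _ c (Hy j l' Hj Hl') Hc) as Hcp.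
      destruct (Hcp del Hdel) as [a [Ha Hal]]. exists a. split; auto.
      intros s Hs. destruct (Req_dec s c). subst. unfold Rminus. rewrite Rplus_opp_r, Rabs_R0. auto.
      apply (Hal s). split. split. constructor. auto. exact Hs.
    - intros l' dl dl' Hdd HP s Hs. apply HP. lra.
    - exists d2. split; auto. }
  { intros j dl dl' Hdd HP s Hs. apply HP. lra. }
  exists (Rmin (Rmin del d1) c). split. repeat apply Rmin_glb_lt; lra.
  intros s [_ Hs]. change (Rabs (s - c) < Rmin (Rmin del d1) c) in Hs. change (Rabs (U (y s) s l - U (y c) c l) < eps).
  pose proof (Rmin_l (Rmin del d1) c). pose proof (Rmin_r (Rmin del d1) c).
  pose proof (Rmin_l del d1). pose proof (Rmin_r del d1).
  apply Hd. apply Rabs_def2 in Hs. lra. lra.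
  intros j l' Hj Hl'. apply H1; auto. lra. Qed.

Lemma H_deriv (Z : R -> R) t0 t1 c : t0 < c < t1 -> ex_RInt Z t0 t1 -> continuity_pt Z c ->
  derivable_pt_lim (fun s => RInt Z t0 s) c (Z c).
Proof. intros Hc Hex Hcont. apply is_derive_Reals.
  apply (is_derive_RInt Z (fun s => RInt Z t0 s) t0 c).
  - apply (locally_interval _ c t0 t1); simpl; try lra.
    intros y H1 H2. apply (@RInt_correct R_CompleteNormedModule). apply (@ex_RInt_Chasles_1 R_CompleteNormedModule) with t1; auto. lra.
  - apply continuity_pt_filterlim. auto. Qed.

Lemma argmax k (f : nat -> R) : (1 <= k)%nat -> exists j, (j < k)%nat /\ forall j', (j' < k)%nat -> f j' <= f j.
Proof. intros Hk. induction k. lia.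
  destruct (Nat.eq_dec k 0). subst. exists 0%nat. split. lia. intros j' Hj'. replace j' with 0%nat by lia. lra.
  destruct IHk as [j [Hj Hm]]. lia.
  destruct (Rle_dec (f k) (f j)).
  - exists j. split. lia. intros j' Hj'. destruct (Nat.eq_dec j' k). subst; auto. apply Hm; lia.
  - exists k. split. lia. intros j' Hj'. destruct (Nat.eq_dec j' k). subst; lra. pose proof (Hm j' ltac:(lia)). lra. Qed.

Lemma H_lip (Z : R -> R) a b K : ex_RInt Z a b -> (forall s, a <= s <= b -> Rabs (Z s) <= K) ->
  forall s s', a <= s <= b -> a <= s' <= b -> Rabs (RInt Z a s' - RInt Z a s) <= K * Rabs (s' - s).
Proof. intros Hex HK.
  assert (Hsub : forall u v, a <= u <= v -> v <= b -> ex_RInt Z u v).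
  { intros u v Hu Hv. apply (@ex_RInt_Chasles_2 R_CompleteNormedModule) with a. lra.
    apply (@ex_RInt_Chasles_1 R_CompleteNormedModule) with b; auto. lra. }
  assert (Hc : forall s s', a <= s <= s' -> s' <= b -> Rabs (RInt Z a s' - RInt Z a s) <= K * Rabs (s' - s)).
  { intros s s' Hs Hs'.
    assert (E : RInt Z a s' = RInt Z a s + RInt Z s s').
    { symmetry. apply (@RInt_Chasles R_CompleteNormedModule); apply Hsub; lra. }
    rewrite E. assert (AB : forall A B : R, A + B - A = B) by (intros; ring). rewrite AB.
    rewrite (Rabs_right (s' - s)) by lra. rewrite Rmult_comm.
    apply abs_RInt_le_const. lra. apply Hsub; lra. intros; apply HK; lra. }
  intros s s' Hs Hs'. destruct (Rle_dec s s'). apply Hc; lra.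
  rewrite Rabs_minus_sym, (Rabs_minus_sym s' s). apply Hc; lra. Qed.

Lemma deriv_comb (F Hf Bf : R -> R) c lF lH lB K : derivable_pt_lim F c lF -> derivable_pt_lim Hf c lH ->
  derivable_pt_lim Bf c lB ->
  derivable_pt_lim (fun r => F r - Hf r - Bf r - K) c (lF - lH - lB).
Proof. intros H1 H2 H3. apply is_derive_Reals. apply is_derive_Reals in H1, H2, H3.
  replace (lF - lH - lB) with (lF - lH - lB - 0) by ring.
  apply (is_derive_minus (fun r => F r - Hf r - Bf r) (fun _ => K)).
  apply (is_derive_minus (fun r => F r - Hf r) Bf). apply (is_derive_minus F Hf); auto. auto.
  apply (is_derive_const (V:=R_NormedModule)). Qed.

Lemma cont_on_dot p q a b d e (X : R -> nat -> R) : a <= p -> q <= b ->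
  (forall l, (l < d)%nat -> cont_on a b (fun r => X r l)) -> cont_on p q (fun r => dot d e (X r)).
Proof. intros Hp Hq H. unfold dot. apply (cont_on_rsum p q d (fun l r => e l * X r l)).
  intros l Hl. apply cont_on_scal. apply cont_on_sub with a b; auto. Qed.

Theorem lemma9 :
  forall (n : nat) (a_up b_low : R),
    (2 <= n)%nat -> 0 < a_up -> 0 < b_low ->
  exists delta : R -> R,
    delta 0 = 1 /\
    (forall s, 0 <= s -> 0 < delta s <= 1) /\
    (forall s1 s2, 0 <= s1 -> s1 < s2 -> delta s2 < delta s1) /\
  forall (tauD : R) (k d : nat) (a_low : R) (P : Type)
    (G : P -> vertex -> vertex -> bool) (sigma : R -> P)
    (a b : nat -> nat -> (nat -> nat -> R) -> (nat -> nat -> R) -> R -> R)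
    (u : nat -> (nat -> nat -> R) -> R -> nat -> R) (w : nat -> R -> nat -> R)
    (T : R) (x y : R -> nat -> nat -> R) (t0 : R) (i j : nat),
    0 < tauD -> (1 <= k)%nat -> (1 <= d)%nat -> 0 < a_low -> a_low <= a_up ->
    (exists lP : list P, forall p, In p lP) ->
    (forall p v m, G p v (Lead m) = false) ->
    dwell_time_signal tauD sigma ->
    (forall i' j', (i' < n)%nat -> (j' < n)%nat ->
       weight_continuous n k d (a i' j') /\
       forall X Y t, 0 <= t -> a_low <= a i' j' X Y t <= a_up) ->
    (forall i' j', (i' < n)%nat -> (j' < k)%nat ->
       weight_continuous n k d (b i' j') /\
       forall X Y t, 0 <= t -> b_low <= b i' j' X Y t) ->
    (forall j', (j' < k)%nat -> cont_in_y k d (u j') /\ pw_cont_in_t k d (u j')) ->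
    (forall i' l, (i' < n)%nat -> (l < d)%nat -> forall M, cont_on 0 M (fun t => w i' t l)) ->
    is_trajectory n k d G sigma a b u w T x y ->
    0 <= t0 -> t0 + tauD <= T ->
    (i < n)%nat -> (j < k)%nat ->
    (forall t, t0 <= t < t0 + tauD -> G (sigma t) (Lead j) (Fol i) = true) ->
    forall pr : Riemann_integrable (znorm n k d u w y) t0 (t0 + tauD),
    forall t, t0 <= t <= t0 + tauD ->
      hdist d k (y t) (x t i)
        <= delta (t - t0) * maxdist n d k (x t0) (y t0)
           + 2 * sqrt 2 * RiemannInt pr.
Proof.
  intros n a_up b_low Hn Ha Hb.
  set (ca := INR n * a_up). set (cc := ca + b_low).
  assert (Hca : 0 < ca). { unfold ca. apply Rmult_lt_0_compat; auto. apply lt_0_INR. lia. }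
  assert (Hcc : 0 < cc) by (unfold cc; lra).
  exists (fun s => (ca + b_low * exp (- cc * s)) / cc).
  split; [| split; [| split]].
  { replace (- cc * 0) with 0 by ring. rewrite exp_0. unfold cc. field. lra. }
  { intros s Hs. pose proof (exp_pos (- cc * s)).
    assert (exp (- cc * s) <= 1). { rewrite <- exp_0. destruct (Req_dec s 0). subst. replace (-cc*0) with 0 by ring. lra.
      left. apply exp_increasing. nra. }
    split. apply Rdiv_lt_0_compat; nra.
    apply Rmult_le_reg_r with cc; auto. unfold Rdiv. rewrite Rmult_assoc, Rinv_l by lra.
    assert (b_low * exp (- cc * s) <= b_low * 1) by (apply Rmult_le_compat_l; lra). unfold cc in *. lra. }
  { intros s1 s2 H1 H2. assert (exp (- cc * s2) < exp (- cc * s1)) by (apply exp_increasing; nra).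
    unfold Rdiv. apply Rmult_lt_compat_r. apply Rinv_0_lt_compat; lra. nra. }
  intros tauD k d a_low P G sigma a b u w T x y t0 i j HtauD Hk Hd Hal Halu HlP HGL Hdw Ha' Hb' Hu Hw Htraj Ht0 HT Hi Hj Hedge pr t Ht.

  destruct Htraj as [Hxc [Hyc [S [HS Hder]]]].
  assert (HI0 : RiemannInt pr = RInt (znorm n k d u w y) t0 (t0+tauD)) by (symmetry; apply RInt_Reals).
  rewrite HI0.
  set (Z := znorm n k d u w y).
  assert (HexI : ex_RInt Z t0 (t0 + tauD)) by (exact (ex_RInt_Reals_1 _ _ _ pr)).
  assert (HI : RiemannInt pr = RInt Z t0 (t0 + tauD)) by (symmetry; apply RInt_Reals).
  assert (Hex : forall s, t0 <= s <= t0 + tauD -> ex_RInt Z t0 s).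
  { intros s Hs. apply (@ex_RInt_Chasles_1 R_CompleteNormedModule) with (t0 + tauD); auto. }
  assert (HZ0 : forall s, 0 <= Z s) by (intros; apply sqrt_pos).
  set (M0 := maxdist n d k (x t0) (y t0)).
  assert (HM0 : 0 <= M0) by apply maxR_nonneg.
  set (I := RInt Z t0 (t0 + tauD)).
  assert (HIt : 0 <= RInt Z t0 t <= I).
  { assert (0 <= RInt Z t0 t) by (apply RInt_ge_0; [lra| apply Hex; lra| intros; auto]).
    assert (0 <= RInt Z t (t0 + tauD)).
    { apply RInt_ge_0; [lra| |intros; auto]. apply (@ex_RInt_Chasles_2 R_CompleteNormedModule) with t0; auto. }
    assert (E : RInt Z t0 t + RInt Z t (t0 + tauD) = I).
    { apply (@RInt_Chasles R_CompleteNormedModule). apply Hex; lra.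
      apply (@ex_RInt_Chasles_2 R_CompleteNormedModule) with t0; auto. }
    lra. }
  destruct (ex_RInt_ub Z t0 (t0 + tauD) HexI) as [K HK].
  rewrite Rmin_left, Rmax_right in HK by lra.
  assert (HHlip := H_lip Z t0 (t0 + tauD) K HexI ltac:(intros s Hs; apply (HK s Hs))).
  apply Rle_plus_epsilon. intros eps0 Heps0.
  destruct (separation d k (y t) (x t i) Hk eps0 Heps0) as [e [He Hsep]].
  destruct (argmax k (fun j => dot d e (y t0 j)) Hk) as [js [Hjs Hmax]].
  set (c0 := dot d e (y t0 js)).
  set (H := fun s => c0 + RInt Z t0 s).
  assert (HK0 : 0 <= K) by (eapply Rle_trans; [apply Rabs_pos| apply (HK t0); lra]).
  assert (HHc : cont_on t0 t H).
  { intros s Hs eps Heps. exists (eps / (K + 1)). split. apply Rdiv_lt_0_compat; lra.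
    intros s' Hs' Hss. unfold H.
    replace (c0 + RInt Z t0 s' - (c0 + RInt Z t0 s)) with (RInt Z t0 s' - RInt Z t0 s) by ring.
    eapply Rle_lt_trans. apply HHlip; lra.
    apply Rle_lt_trans with (K * (eps / (K + 1))). apply Rmult_le_compat_l; lra.
    apply Rmult_lt_reg_r with (K + 1). lra. replace (K * (eps / (K + 1)) * (K + 1)) with (K * eps) by (field; lra). nra. }
  assert (Hgood : forall s, t0 < s <= t0 + tauD -> exists h, 0 < h /\ forall c, s - h < c < s -> t0 < c ->
     (forall j' l, (j' < k)%nat -> (l < d)%nat -> derivable_pt_lim (fun r => y r j' l) c (u j' (y c) c l)) /\
     (forall m l, (m < n)%nat -> (l < d)%nat -> derivable_pt_lim (fun r => x r m l) c (rhs_x n k G sigma a b w x y m c l)) /\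
     continuity_pt Z c).
  { intros s Hs. destruct (gap S HS s) as [h1 [Hh1 HG1]].
    destruct (fin_delta k (fun j' h => exists D : R -> Prop,
        (forall t Y, 0 <= t -> ~ D t -> forall l, (l < d)%nat -> forall eps, 0 < eps ->
          exists del, 0 < del /\ forall Y' t', 0 <= t' -> Rabs (t' - t) < del ->
            Defs.close k d del Y Y' -> Rabs (u j' Y' t' l - u j' Y t l) < eps) /\
        forall c, s - h < c < s -> ~ D c)) as [h2 [Hh2 HG2]].
    { intros j' Hj'. destruct (Hu j' Hj') as [_ [D [HD HDp]]]. destruct (gap D HD s) as [h [Hh HGD]].
      exists h. split; auto. exists D. split; auto. }
    { intros j' h h' Hhh [D [H1 H2]]. exists D. split; auto. intros c Hc. apply H2. lra. }
    exists (Rmin h1 h2). split. apply Rmin_glb_lt; auto.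
    intros c Hc Hc0. pose proof (Rmin_l h1 h2). pose proof (Rmin_r h1 h2).
    assert (Hc1 : 0 < c < T) by lra.
    destruct (Hder c Hc1 ltac:(apply HG1; lra)) as [Dy Dx].
    split; [exact Dy| split; [exact Dx|]].
    unfold Z, znorm.
    apply (continuity_pt_comp (fun r => rsum k (fun j0 => vnorm2 d (u j0 (y r) r)) + rsum n (fun i0 => vnorm2 d (w i0 r))) sqrt).
    - apply (continuity_pt_plus (fun r => rsum k (fun j0 => vnorm2 d (u j0 (y r) r))) (fun r => rsum n (fun i0 => vnorm2 d (w i0 r)))).
      + apply (cont_pt_rsum k (fun j0 r => vnorm2 d (u j0 (y r) r))). intros j' Hj'.
        apply (cont_pt_vnorm2 d (fun r l => u j' (y r) r l)). intros l Hl.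
        destruct (HG2 j' Hj') as [D [HDp HDc]].
        apply (u_comp_cont k d (u j') y c l T Hc1 Hyc).
        intros eps Heps. apply HDp; auto. lra. apply HDc. lra.
      + apply (cont_pt_rsum n (fun i0 r => vnorm2 d (w i0 r))). intros m Hm.
        apply (cont_pt_vnorm2 d (fun r l => w m r l)). intros l Hl.
        apply (cont_pt_of_cont_on 0 (T + 1)). apply Hw; auto. lra.
    - apply continuity_pt_sqrt. apply Rplus_le_le_0_compat; apply rsum_nonneg; intros; apply vnorm2_nonneg. }
  assert (HvnU : forall c j', (j' < k)%nat -> vnorm d (u j' (y c) c) <= Z c).
  { intros c j' Hj'. unfold vnorm, Z, znorm. apply sqrt_le_1_alt.
    assert (vnorm2 d (u j' (y c) c) <= rsum k (fun j0 => vnorm2 d (u j0 (y c) c))).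
    { apply (rsum_ge_term k (fun j0 => vnorm2 d (u j0 (y c) c))); auto. intros; apply vnorm2_nonneg. }
    assert (0 <= rsum n (fun i0 => vnorm2 d (w i0 c))) by (apply rsum_nonneg; intros; apply vnorm2_nonneg).
    lra. }
  assert (HvnW : forall c m, (m < n)%nat -> vnorm d (w m c) <= Z c).
  { intros c m Hm. unfold vnorm, Z, znorm. apply sqrt_le_1_alt.
    assert (vnorm2 d (w m c) <= rsum n (fun i0 => vnorm2 d (w i0 c))).
    { apply (rsum_ge_term n (fun i0 => vnorm2 d (w i0 c))); auto. intros; apply vnorm2_nonneg. }
    assert (0 <= rsum k (fun j0 => vnorm2 d (u j0 (y c) c))) by (apply rsum_nonneg; intros; apply vnorm2_nonneg).
    lra. }
  assert (Hne : vnorm2 d (fun l => - e l) <= 1).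
  { unfold vnorm2 in *. rewrite (rsum_ext d _ (fun l => e l * e l)) by (intros; ring). auto. }
  assert (Hdneg : forall v, dot d (fun l => - e l) v = - dot d e v).
  { intros v. unfold dot. replace (- rsum d (fun l => e l * v l)) with (-1 * rsum d (fun l => e l * v l)) by ring.
    rewrite <- rsum_scal. apply rsum_ext. intros; ring. }
  assert (HdH : forall c, t0 < c < t0 + tauD -> continuity_pt Z c -> derivable_pt_lim H c (Z c)).
  { intros c Hc Hzc. unfold H. apply is_derive_Reals.
    replace (Z c) with (0 + Z c) by ring.
    apply (is_derive_plus (fun _ => c0) (fun s => RInt Z t0 s)). apply (is_derive_const (V:=R_NormedModule)).
    apply is_derive_Reals. apply H_deriv with (t0 + tauD); auto. }
  assert (HH0 : H t0 = c0).
  { unfold H. rewrite RInt_point. simpl. unfold zero; simpl. ring. }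
  assert (Hyup : forall j', (j' < k)%nat -> forall s, t0 <= s <= t -> dot d e (y s j') <= H s).
  { intros j' Hj' s Hs. apply Rle_plus_epsilon. intros eps Heps.
    enough (dot d e (y s j') - H s - (fun _ => 0) s - eps < 0) by lra.
    apply (barrier2 1 t0 t (fun _ r => dot d e (y r j') - H r - (fun _ => 0) r - eps)) with (m := 0%nat); try lra; try lia.
    - intros _ _. apply cont_on_minus; [|apply cont_on_const].
      apply cont_on_minus; [|apply cont_on_const]. apply cont_on_minus; auto.
      apply (cont_on_dot t0 t 0 T); try lra. intros l Hl. apply Hyc; auto.
    - intros _ _. rewrite HH0. pose proof (Hmax j' Hj'). fold c0 in H0. lra.
    - intros s' m Hs' Hm E Hneg. destruct (Hgood s' ltac:(lra)) as [h [Hh Hg]].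
      exists h. split; auto. intros c Hc Hc0. destruct (Hg c Hc Hc0) as [Dy [Dx Zc]].
      exists (dot d e (u j' (y c) c) - Z c - 0). split.
      + apply deriv_comb. apply deriv_dot. intros l Hl. apply Dy; auto.
        apply HdH; auto; lra. apply (derivable_pt_lim_const 0).
      + pose proof (dot_le d e (u j' (y c) c) He). pose proof (HvnU c j' Hj'). lra. }
  assert (HRc : cont_on t0 t (fun r => RInt Z t0 r)).
  { intros s Hs eps Heps. destruct (HHc s Hs eps Heps) as [del [Hdel Hdd]]. exists del. split; auto.
    intros s' Hs' Hss. pose proof (Hdd s' Hs' Hss). unfold H in H0.
    replace (c0 + RInt Z t0 s' - (c0 + RInt Z t0 s)) with (RInt Z t0 s' - RInt Z t0 s) in H0 by ring. auto. }
  assert (Hylow : forall s, t0 <= s <= t -> c0 - RInt Z t0 s <= dot d e (y s js)).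
  { intros s Hs. apply Rle_plus_epsilon. intros eps Heps.
    enough (dot d (fun l => - e l) (y s js) - (fun r => RInt Z t0 r) s - (fun _ => - c0) s - eps < 0) by (rewrite Hdneg in H0; simpl in H0; lra).
    apply (barrier2 1 t0 t (fun _ r => dot d (fun l => - e l) (y r js) - (fun r => RInt Z t0 r) r - (fun _ => - c0) r - eps)) with (m := 0%nat); try lra; try lia.
    - intros _ _. apply cont_on_minus; [|apply cont_on_const].
      apply cont_on_minus; [|apply cont_on_const]. apply cont_on_minus; auto.
      apply (cont_on_dot t0 t 0 T); try lra. intros l Hl. apply Hyc; auto.
    - intros _ _. rewrite Hdneg. simpl. rewrite RInt_point. unfold zero; simpl. fold c0. lra.
    - intros s' m Hs' Hm E Hneg. destruct (Hgood s' ltac:(lra)) as [h [Hh Hg]].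
      exists h. split; auto. intros c Hc Hc0. destruct (Hg c Hc Hc0) as [Dy [Dx Zc]].
      exists (dot d (fun l => - e l) (u js (y c) c) - Z c - 0). split.
      + apply deriv_comb. apply deriv_dot. intros l Hl. apply Dy; auto.
        apply H_deriv with (t0 + tauD); auto; lra. apply (derivable_pt_lim_const (- c0)).
      + pose proof (dot_le d _ (u js (y c) c) Hne). pose proof (HvnU c js Hjs). lra. }
  assert (Hinit : forall m, (m < n)%nat -> dot d e (x t0 m) - c0 <= M0).
  { intros m Hm. apply Rle_plus_epsilon. intros eta Heta.
    destruct (sd_approx d (x t0 m) (hull d k (y t0)) (ex_intro _ (y t0 0%nat) (hull_vertex d k (y t0) 0%nat ltac:(lia))) eta Heta)
      as [p [Hp Hpv]].
    assert (dot d e p <= c0) by (apply hull_dot with k (y t0); auto).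
    pose proof (dot_le d e (fun l => x t0 m l - p l) He). rewrite dot_minus in H1.
    assert (hdist d k (y t0) (x t0 m) <= M0).
    { unfold M0, maxdist. apply (maxR_ge n (fun i0 => hdist d k (y t0) (x t0 i0))). auto. }
    unfold hdist in H2. lra. }
  assert (Hmp : forall m, (m < n)%nat -> forall s, t0 <= s <= t -> dot d e (x s m) - H s <= M0).
  { intros m Hm s Hs. apply Rle_plus_epsilon. intros eps' Heps'.
    set (eps := eps' / (1 + tauD)).
    assert (Heps : 0 < eps) by (apply Rdiv_lt_0_compat; lra).
    assert (Heps1 : eps * (1 + tauD) = eps') by (unfold eps; field; lra).
    enough (dot d e (x s m) - H s - (fun r => eps * (r - t0)) s - (M0 + eps) < 0).
    { simpl in H0. assert (eps * (s - t0) <= eps * tauD) by (apply Rmult_le_compat_l; lra). nra. }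
    set (eta := eps / (ca + 1)).
    assert (Heta : 0 < eta) by (apply Rdiv_lt_0_compat; lra).
    assert (Heta1 : eta <= eps).
    { unfold eta. apply Rmult_le_reg_r with (ca + 1). lra.
      replace (eps / (ca + 1) * (ca + 1)) with eps by (field; lra). nra. }
    assert (Heta2 : INR n * (a_up * eta) <= eps).
    { unfold eta. replace (INR n * (a_up * (eps / (ca + 1)))) with (eps * (ca / (ca + 1))) by (unfold ca; field; unfold ca in Hca; lra).
      assert (ca / (ca + 1) <= 1). { apply Rmult_le_reg_r with (ca + 1). lra.
        replace (ca / (ca + 1) * (ca + 1)) with ca by (field; lra). lra. }
      nra. }
    set (phi := fun m r => dot d e (x r m) - H r - (fun r => eps * (r - t0)) r - (M0 + eps)).
    assert (Hphic : forall m', (m' < n)%nat -> cont_on t0 t (phi m')).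
    { intros m' Hm'. unfold phi. apply cont_on_minus; [|apply cont_on_const].
      apply cont_on_minus; [apply cont_on_minus; auto|].
      apply (cont_on_dot t0 t 0 T); try lra. intros l Hl. apply Hxc; auto.
      apply cont_on_scal. apply cont_on_minus; [|apply cont_on_const].
      intros r Hr e' He'. exists e'. split; auto. }
    apply (barrier2 n t0 t phi); try lra; auto.
    - intros m' Hm'. unfold phi. rewrite HH0. pose proof (Hinit m' Hm'). lra.
    - intros s' m' Hs' Hm' E Hneg.
      destruct (Hgood s' ltac:(lra)) as [h [Hh Hg]].
      destruct (Hphic m' Hm' s' ltac:(lra) eta Heta) as [del [Hdel Hdl]].
      exists (Rmin h del). split. apply Rmin_glb_lt; auto.
      intros c Hc Hc0. pose proof (Rmin_l h del). pose proof (Rmin_r h del).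
      assert (Hpc : - eta < phi m' c).
      { pose proof (Hdl c ltac:(lra) ltac:(rewrite Rabs_left; lra)). rewrite E in H2.
        apply Rabs_def2 in H2. lra. }
      assert (Hnc : forall j', (j' < n)%nat -> phi j' c < 0) by (intros; apply Hneg; auto; lra).
      destruct (Hg c ltac:(lra) Hc0) as [Dy [Dx Zc]].
      exists (dot d e (fun l => rhs_x n k G sigma a b w x y m' c l) - Z c - eps). split.
      + unfold phi. apply deriv_comb. apply deriv_dot. intros l Hl. apply Dx; auto.
        apply HdH; auto; lra.
        apply is_derive_Reals. auto_derive; auto. ring.
      + rewrite rhs_dot.
        assert (HA : rsum n (fun j0 => if G (sigma c) (Fol j0) (Fol m') then a m' j0 (x c) (y c) c * (dot d e (x c j0) - dot d e (x c m')) else 0) <= INR n * (a_up * eta)).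
        { apply rsum_le_const. intros j' Hj'. destruct (G (sigma c) (Fol j') (Fol m')); [|nra].
          destruct (Ha' m' j' Hm' Hj') as [_ Hab]. pose proof (Hab (x c) (y c) c ltac:(lra)) as Habc.
          pose proof (Hnc j' Hj') as Hnj. unfold phi in Hnj, Hpc. simpl in Hnj, Hpc.
          assert (Hdf : dot d e (x c j') - dot d e (x c m') <= eta) by lra.
          assert (a m' j' (x c) (y c) c * (dot d e (x c j') - dot d e (x c m')) <= a m' j' (x c) (y c) c * eta)
            by (apply Rmult_le_compat_l; lra).
          assert (a m' j' (x c) (y c) c * eta <= a_up * eta) by (apply Rmult_le_compat_r; lra). lra. }
        assert (HB : rsum k (fun j0 => if G (sigma c) (Lead j0) (Fol m') then b m' j0 (x c) (y c) c * (dot d e (y c j0) - dot d e (x c m')) else 0) <= 0).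
        { apply Rle_trans with (rsum k (fun _ => 0)); [|rewrite rsum_zero; lra].
          apply rsum_le. intros j' Hj'. destruct (G (sigma c) (Lead j') (Fol m')); [|lra].
          destruct (Hb' m' j' Hm' Hj') as [_ Hbb]. pose proof (Hbb (x c) (y c) c ltac:(lra)).
          pose proof (Hyup j' Hj' c ltac:(lra)). unfold phi in Hpc. simpl in Hpc.
          assert (c - t0 >= 0) by lra. assert (eps * (c - t0) >= 0) by nra.
          assert (dot d e (y c j') - dot d e (x c m') <= 0) by lra. nra. }
        pose proof (dot_le d e (w m' c) He). pose proof (HvnW c m' Hm'). lra. }
  set (beta := fun r => (ca + b_low * exp (- cc * (r - t0))) / cc * M0).
  assert (Hbeta0 : beta t0 = M0).
  { unfold beta. replace (- cc * (t0 - t0)) with 0 by ring. rewrite exp_0. unfold cc. field. lra. }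
  assert (Hbetapos : forall r, 0 <= beta r).
  { intros r. unfold beta. pose proof (exp_pos (- cc * (r - t0))). apply Rmult_le_pos; auto.
    left. apply Rdiv_lt_0_compat; nra. }
  assert (Hbetad : forall c, derivable_pt_lim beta c (ca * M0 - cc * beta c)).
  { intros c. apply is_derive_Reals. unfold beta. auto_derive; auto. replace (c + - t0) with (c - t0) by ring. field. lra. }
  assert (Hld : forall s, t0 <= s <= t -> dot d e (x s i) - H s <= beta s).
  { intros s Hs. apply Rle_plus_epsilon. intros eps Heps.
    set (phi := fun (_ : nat) r => dot d e (x r i) - H r - beta r - eps).
    assert (Hphic : cont_on t0 t (phi 0%nat)).
    { unfold phi. apply cont_on_minus; [|apply cont_on_const].
      apply cont_on_minus; [apply cont_on_minus; auto|].
      apply (cont_on_dot t0 t 0 T); try lra. intros l Hl. apply Hxc; auto.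
      apply cont_on_of_pt. intros r _. apply derivable_continuous_pt. exists (ca * M0 - cc * beta r). apply Hbetad. }
    enough (phi 0%nat s < 0) by (unfold phi in H0; lra).
    apply (barrier2 1 t0 t phi); try lra; try lia.
    - intros m' _. exact Hphic.
    - intros m' _. unfold phi. rewrite HH0, Hbeta0. pose proof (Hinit i Hi). lra.
    - intros s' m' Hs' Hm' E Hneg. replace m' with 0%nat in * by lia.
      destruct (Hgood s' ltac:(lra)) as [h [Hh Hg]].
      destruct (Hphic s' ltac:(lra) eps Heps) as [del [Hdel Hdl]].
      exists (Rmin h del). split. apply Rmin_glb_lt; auto.
      intros c Hc Hc0. pose proof (Rmin_l h del). pose proof (Rmin_r h del).
      assert (Hpc : - eps < phi 0%nat c).
      { pose proof (Hdl c ltac:(lra) ltac:(rewrite Rabs_left; lra)). rewrite E in H2.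
        apply Rabs_def2 in H2. lra. }
      unfold phi in Hpc.
      destruct (Hg c ltac:(lra) Hc0) as [Dy [Dx Zc]].
      set (psi := dot d e (x c i) - H c).
      assert (Hpsi0 : 0 <= psi) by (pose proof (Hbetapos c); unfold psi; lra).
      assert (HpsiM : psi <= M0) by (apply Hmp; auto; lra).
      exists (dot d e (fun l => rhs_x n k G sigma a b w x y i c l) - Z c - (ca * M0 - cc * beta c)). split.
      + unfold phi. apply deriv_comb. apply deriv_dot. intros l Hl. apply Dx; auto.
        apply HdH; auto; lra. apply Hbetad.
      + rewrite rhs_dot.
        assert (HA : rsum n (fun j0 => if G (sigma c) (Fol j0) (Fol i) then a i j0 (x c) (y c) c * (dot d e (x c j0) - dot d e (x c i)) else 0) <= INR n * (a_up * (M0 - psi))).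
        { apply rsum_le_const. intros j' Hj'. destruct (G (sigma c) (Fol j') (Fol i)); [|nra].
          destruct (Ha' i j' Hi Hj') as [_ Hab]. pose proof (Hab (x c) (y c) c ltac:(lra)) as Habc.
          pose proof (Hmp j' Hj' c ltac:(lra)) as Hnj.
          assert (Hdf : dot d e (x c j') - dot d e (x c i) <= M0 - psi) by (unfold psi; lra).
          assert (a i j' (x c) (y c) c * (dot d e (x c j') - dot d e (x c i)) <= a i j' (x c) (y c) c * (M0 - psi))
            by (apply Rmult_le_compat_l; lra).
          assert (a i j' (x c) (y c) c * (M0 - psi) <= a_up * (M0 - psi)) by (apply Rmult_le_compat_r; lra). lra. }
        assert (HB : rsum k (fun j0 => if G (sigma c) (Lead j0) (Fol i) then b i j0 (x c) (y c) c * (dot d e (y c j0) - dot d e (x c i)) else 0) <= - b_low * psi).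
        { eapply Rle_trans. apply (rsum_le_term k _ j).
          - intros j' Hj'. destruct (G (sigma c) (Lead j') (Fol i)); [|lra].
            destruct (Hb' i j' Hi Hj') as [_ Hbb]. pose proof (Hbb (x c) (y c) c ltac:(lra)).
            pose proof (Hyup j' Hj' c ltac:(lra)).
            assert (dot d e (y c j') - dot d e (x c i) <= 0) by (unfold psi in Hpsi0; lra). nra.
          - auto.
          - simpl. rewrite Hedge by lra.
            destruct (Hb' i j Hi Hj) as [_ Hbb]. pose proof (Hbb (x c) (y c) c ltac:(lra)).
            pose proof (Hyup j Hj c ltac:(lra)).
            assert (dot d e (y c j) - dot d e (x c i) <= - psi) by (unfold psi; lra). nra. }
        pose proof (dot_le d e (w i c) He). pose proof (HvnW c i Hi).
        assert (INR n * (a_up * (M0 - psi)) = ca * (M0 - psi)) by (unfold ca; ring).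
        unfold cc. unfold psi in *. nra. }
  pose proof (Hsep js Hjs) as F1. pose proof (Hylow t ltac:(lra)) as F2.
  pose proof (Hld t ltac:(lra)) as F3. unfold H in F3. unfold beta in F3.
  assert (Hs2 : 1 <= sqrt 2). { rewrite <- sqrt_1. apply sqrt_le_1_alt. lra. }
  assert (2 * RInt Z t0 t <= 2 * sqrt 2 * I) by nra.
  lra.
Qed.
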